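(* The graph parameters $\widetilde{\Delta}$, $\mathsf{cdeg}$, $\max\{\mathsf{cideg},\widetilde{\omega}\}$, $\max\{\alpha^{\ast},\widetilde{\omega}\}$ and $\max\{\theta^{\ast},\widetilde{\omega}\}$ are pairwise equivalent, i.e. for any two $p,q$ of them there is a function $g\colon\mathbb{N}\to\mathbb{N}$ with $q(G)\le g(p(G))$ for every finite graph $G$.
   Context: Two vertices are equivalent if they lie in exactly the same maximal cliques. $\widetilde{G}$ is the clique-quotient graph (equivalence classes as vertices, adjacency inherited from representatives) and $\widetilde{\Delta}(G)$ its maximum degree. $\widetilde{\omega}(G)$ is the maximum over maximal cliques $K$ of the number of equivalence classes meeting $K$; $\mathsf{cideg}(G)$ is the maximum over vertices of the number of maximal cliques containing it; $\mathsf{cdeg}(G)$ is the maximum over maximal cliques $K$ of the number of other maximal cliques intersecting $K$. $\alpha^{\ast}(G)=\max_v\alpha(G[N[v]])$, $\theta^{\ast}(G)=\max_v\theta(G[N[v]])$ with $\theta$ the clique-cover number. *)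

(* Defs.v *)
(* A finite simple graph is a finite type T of vertices with a
   symmetric irreflexive adjacency relation e : rel T. *)
From Stdlib Require List.
From mathcomp Require Import all_boot.
Set Implicit Arguments. Unset Strict Implicit. Unset Printing Implicit Defensive.

Section GraphParams.
Variables (T : finType) (e : rel T).

Definition is_clique (A : {set T}) : bool :=
  [forall x in A, forall y in A, (x != y) ==> e x y].

Definition is_maxclique (A : {set T}) : bool :=
  is_clique A && [forall B : {set T}, (is_clique B && (A \subset B)) ==> (B == A)].

Definition maxcliques : {set {set T}} := [set A | is_maxclique A].

Definition cliques_of (v : T) : {set {set T}} := [set K in maxcliques | v \in K].

Definition cequiv (u v : T) : bool := cliques_of u == cliques_of v.

Definition cclass (v : T) : {set T} := [set u | cequiv u v].

(* Vertices of the clique-quotient graph: the equivalence classes. *)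
Definition cclasses : {set {set T}} := [set cclass v | v in T].

(* Adjacency in the clique-quotient graph, inherited from representatives. *)
Definition qadj (C D : {set T}) : bool :=
  (C != D) && [exists u in C, exists w in D, e u w].

Definition Delta_tilde : nat :=
  \max_(C in cclasses) #|[set D in cclasses | qadj C D]|.

Definition omega_tilde : nat :=
  \max_(K in maxcliques) #|[set C in cclasses | C :&: K != set0]|.

Definition cideg : nat := \max_(v : T) #|cliques_of v|.

Definition cdeg : nat :=
  \max_(K in maxcliques) #|[set K' in maxcliques | (K' != K) && (K' :&: K != set0)]|.

Definition closed_nbhd (v : T) : {set T} := v |: [set w | e v w].

Definition is_indep (S : {set T}) : bool :=
  [forall x in S, forall y in S, ~~ e x y].

Definition alpha_in (A : {set T}) : nat :=
  \max_(S : {set T} | (S \subset A) && is_indep S) #|S|.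

Definition is_clique_cover (A : {set T}) (P : {set {set T}}) : bool :=
  [forall B in P, is_clique B && (B \subset A)] && (cover P == A).

(* Clique-cover number of G[A]: minimum size of a clique cover
   (#|A| is always attained by singletons, so it is a valid default). *)
Definition theta_in (A : {set T}) : nat :=
  \big[minn/#|A|]_(P : {set {set T}} | is_clique_cover A P) #|P|.

Definition alpha_star : nat := \max_(v : T) alpha_in (closed_nbhd v).
Definition theta_star : nat := \max_(v : T) theta_in (closed_nbhd v).

End GraphParams.

Definition graph_param := forall T : finType, rel T -> nat.

Definition param_bounded_by (p q : graph_param) : Prop :=
  exists g : nat -> nat, forall (T : finType) (e : rel T),
    symmetric e -> irreflexive e -> q T e <= g (p T e).

Definition cor54_params : seq graph_param :=
  [:: (fun T e => @Delta_tilde T e);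
      (fun T e => @cdeg T e);
      (fun T e => maxn (@cideg T e) (@omega_tilde T e));
      (fun T e => maxn (@alpha_star T e) (@omega_tilde T e));
      (fun T e => maxn (@theta_star T e) (@omega_tilde T e)) ].

(* Main.v *)
Require Import Defs.
From mathcomp Require Import all_boot.
From Stdlib Require List.
From mathcomp Require Import zify.
Set Implicit Arguments. Unset Strict Implicit. Unset Printing Implicit Defensive.
Lemma card_bigcup_le (T I : finType) (P : pred I) (F : I -> {set T}) :
  #|\bigcup_(i | P i) F i| <= \sum_(i | P i) #|F i|.
Proof.
elim/big_rec2: _ => [|i y U _ IH]; first by rewrite cards0.
by apply: leq_trans (leq_card_setU _ _) _; rewrite leq_add2l.
Qed.

Lemma card_bigcup_leM (T I : finType) (A : {set I}) (F : I -> {set T}) m :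
  (forall i, i \in A -> #|F i| <= m) -> #|\bigcup_(i in A) F i| <= #|A| * m.
Proof.
move=> H; apply: leq_trans (card_bigcup_le _ _) _.
rewrite -sum_nat_const; exact: leq_sum.
Qed.

Lemma card_imset_le_fun (T U V : finType) (A : {set T}) (f : T -> U) (g : T -> V) :
  {in A &, forall x y, g x = g y -> f x = f y} -> #|f @: A| <= #|g @: A|.
Proof.
move=> H; case: (set_0Vmem A) => [->|[x0 Hx0]]; first by rewrite imset0 cards0.
pose h Y := f (odflt x0 [pick x in A | g x == Y]).
apply: leq_trans (leq_imset_card h (g @: A)).
apply: subset_leq_card; apply/subsetP => _ /imsetP [x Hx ->].
apply/imsetP; exists (g x); first exact: imset_f.
rewrite /h; case: pickP => [x' /andP [Hx' /eqP Hg]|/(_ x)]; last by rewrite Hx eqxx.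
by rewrite /= (H _ _ Hx' Hx Hg).
Qed.

Lemma bigmin_le (I : finType) (P : pred I) (F : I -> nat) d j :
  P j -> \big[minn/d]_(i | P i) F i <= F j.
Proof.
move=> Pj; have : j \in index_enum I by rewrite mem_index_enum.
elim: (index_enum I) => //= i s IH; rewrite inE big_cons => /orP [/eqP <-|Hs].
  by rewrite Pj geq_minl.
case: (P i); last exact: IH.
exact: leq_trans (geq_minr _ _) (IH Hs).
Qed.

Section Ramsey.
Variables (T : finType) (r : rel T).
Hypothesis rsym : symmetric r.
Definition rclique (B : {set T}) := {in B &, forall x y, x != y -> r x y}.
Definition rindep (B : {set T}) := {in B &, forall x y, x != y -> ~~ r x y}.

Lemma rclique0 : rclique set0. Proof. by move=> x y; rewrite inE. Qed.
Lemma rindep0 : rindep set0. Proof. by move=> x y; rewrite inE. Qed.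

Lemma ramsey n : forall s t (A : {set T}), s + t <= n -> 2 ^ n <= #|A| ->
  (exists2 B : {set T}, B \subset A & (#|B| = s /\ rclique B)) \/
  (exists2 B : {set T}, B \subset A & (#|B| = t /\ rindep B)).
Proof.
elim: n => [|n IH] s t A.
  move=> Hst _; left; exists set0; first exact: sub0set.
  by split; [rewrite cards0; lia | exact: rclique0].
case: s => [|s].
  by move=> _ _; left; exists set0; [exact: sub0set | split; [rewrite cards0 | exact: rclique0]].
case: t => [|t].
  by move=> _ _; right; exists set0; [exact: sub0set | split; [rewrite cards0 | exact: rindep0]].
move=> Hst HA.
have [x Hx] : exists x, x \in A.
  apply/set0Pn; apply/negP => /eqP A0; move: HA; rewrite A0 cards0.
  have := expn_gt0 2 n.+1; lia.
set A' := A :\ x.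
set N := A' :&: [set y | r x y].
set M := A' :\: [set y | r x y].
have HNM : #|N| + #|M| = #|A'| := cardsID _ _.
have HA' : #|A| = #|A'|.+1 by rewrite (cardsD1 x A) Hx.
have xN : x \notin N by rewrite !inE eqxx.
have xM : x \notin M by rewrite !inE eqxx /= andbF.
have NA : N \subset A by apply/subsetP => y; rewrite !inE => /andP [/andP [_ H] _].
have MA : M \subset A by apply/subsetP => y; rewrite !inE => /andP [_ /andP [_ H]].
have [HN|HM] : 2 ^ n <= #|N| \/ 2 ^ n <= #|M|.
  rewrite expnS in HA; set k := 2 ^ n in HA *; case: (leqP k #|N|) => Hk; [by left | right; lia].
- have [[B HB [HBc HBcl]]|[B HB [HBc HBi]]] := IH s t.+1 N ltac:(lia) HN.
  + left; exists (x |: B).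
      by apply/subsetP => y; rewrite in_setU1 => /orP [/eqP ->//|/(subsetP HB)/(subsetP NA)].
    have xB : x \notin B by apply: contra xN => /(subsetP HB).
    split; first by rewrite cardsU1 xB HBc.
    move=> y z; rewrite !in_setU1 => /orP [/eqP ->|Hy] /orP [/eqP ->|Hz]; rewrite ?eqxx //.
    * by move=> _; move: (subsetP HB z Hz); rewrite !inE => /andP [_].
    * by move=> _; move: (subsetP HB y Hy); rewrite !inE rsym => /andP [_].
    * exact: HBcl.
  + by right; exists B => //; apply: subset_trans HB NA.
- have [[B HB [HBc HBcl]]|[B HB [HBc HBi]]] := IH s.+1 t M ltac:(lia) HM.
  + by left; exists B => //; apply: subset_trans HB MA.
  + right; exists (x |: B).
      by apply/subsetP => y; rewrite in_setU1 => /orP [/eqP ->//|/(subsetP HB)/(subsetP MA)].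
    have xB : x \notin B by apply: contra xM => /(subsetP HB).
    split; first by rewrite cardsU1 xB HBc.
    move=> y z; rewrite !in_setU1 => /orP [/eqP ->|Hy] /orP [/eqP ->|Hz]; rewrite ?eqxx //.
    * by move=> _; move: (subsetP HB z Hz); rewrite !inE => /andP [H _].
    * by move=> _; move: (subsetP HB y Hy); rewrite !inE => /andP [H _]; rewrite rsym.
    * exact: HBi.
Qed.
End Ramsey.
Definition Hb (x : nat) := 2 ^ (2 ^ (2 * x + 2)).
Lemma pow_le a b : a <= b -> 2 ^ a <= 2 ^ b.
Proof. exact: leq_pexp2l. Qed.
Lemma lt_pow a : a < 2 ^ a.
Proof. exact: ltn_expl. Qed.
Lemma Hb_mono a b : a <= b -> Hb a <= Hb b.
Proof. by move=> H; apply: pow_le; apply: pow_le; lia. Qed.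

Section Graph.
Variables (T : finType) (e : rel T).
Hypotheses (esy : symmetric e) (eirr : irreflexive e).

Local Notation MC := (maxcliques e).
Local Notation cl := (cliques_of e).
Local Notation N := (closed_nbhd e).
Local Notation cc := (cclass e).
Definition cls (A : {set T}) := cc @: A.

Lemma cliqueP (A : {set T}) : reflect {in A &, forall x y, x != y -> e x y} (is_clique e A).
Proof.
apply: (iffP forallP) => [H x y Hx Hy Hxy|H x].
  by have := H x; rewrite Hx /= => /forallP /(_ y); rewrite Hy Hxy.
apply/implyP => Hx; apply/forallP => y; apply/implyP => Hy; apply/implyP; exact: H.
Qed.

Lemma MC_clique (K : {set T}) : K \in MC -> is_clique e K.
Proof. by rewrite inE => /andP []. Qed.

Lemma clE (K : {set T}) v : (K \in cl v) = (K \in MC) && (v \in K).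
Proof. by rewrite inE. Qed.

Lemma clique_ext (A : {set T}) : is_clique e A -> exists2 K, K \in MC & A \subset K.
Proof.
move=> HA.
have P0 : is_clique e A && (A \subset A) by rewrite HA subxx.
case: (@arg_maxnP _ A (fun B : {set T} => is_clique e B && (A \subset B)) (fun B : {set T} => #|B|) P0) => K /andP [HK HAK] Hmax.
exists K => //.
rewrite inE /is_maxclique HK /=; apply/forallP => B; apply/implyP => /andP [HB HKB].
rewrite eq_sym eqEcard HKB /=; apply: Hmax; by rewrite HB (subset_trans HAK HKB).
Qed.

Lemma clique1 v : is_clique e [set v].
Proof. by apply/cliqueP => x y; rewrite !inE => /eqP -> /eqP ->; rewrite eqxx. Qed.

Lemma clique2 v u : e v u -> is_clique e [set v; u].
Proof.
move=> Hvu; apply/cliqueP => x y; rewrite !inE.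
by move=> /orP [] /eqP -> /orP [] /eqP ->; rewrite ?eqxx // esy.
Qed.

Lemma nbhdP v u : reflect (exists2 K, K \in cl v & u \in K) (u \in N v).
Proof.
apply: (iffP idP).
  rewrite /closed_nbhd in_setU1 inE => /orP [/eqP ->|Hvu].
    have [K HK HvK] := clique_ext (clique1 v).
    by exists K; [rewrite clE HK (subsetP HvK) // set11 | rewrite (subsetP HvK) // set11].
  have [K HK HvK] := clique_ext (clique2 Hvu).
  exists K; first by rewrite clE HK (subsetP HvK) // set21.
  by rewrite (subsetP HvK) // !inE eqxx orbT.
case=> K; rewrite clE => /andP [HK HvK] HuK.
rewrite /closed_nbhd in_setU1 inE; case: (eqVneq u v) => //= Huv.
by apply: (cliqueP _ (MC_clique HK)) => //; rewrite eq_sym.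
Qed.

Lemma nbhd_eq u v : cl u = cl v -> N u = N v.
Proof. by move=> H; apply/setP => x; apply/nbhdP/nbhdP; rewrite H. Qed.

Lemma nbhd_self v : v \in N v.
Proof. by rewrite /closed_nbhd in_setU1 eqxx. Qed.

Lemma cc_refl u : u \in cc u.
Proof. by rewrite inE /cequiv eqxx. Qed.

Lemma memcc x u : (x \in cc u) = (cl x == cl u).
Proof. by rewrite inE. Qed.

Lemma ccE u w : cc u = cc w <-> cl u = cl w.
Proof.
split => [H|H].
  have : u \in cc w by rewrite -H cc_refl. 
  by rewrite memcc => /eqP.
by apply/setP => x; rewrite !memcc H.
Qed.

Lemma in_clique_equiv x y K : cl x = cl y -> K \in MC -> (x \in K) = (y \in K).
Proof.
move=> H HK; have : (K \in cl x) = (K \in cl y) by rewrite H.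
by rewrite !clE HK.
Qed.

Lemma clsK K : [set C in cclasses e | C :&: K != set0] = cls K.
Proof.
apply/setP => C; rewrite inE; apply/andP/imsetP.
  case=> /imsetP [v _ ->] /set0Pn [u]; rewrite inE => /andP [Hu HuK].
  exists u => //; apply/ccE; move: Hu; rewrite memcc => /eqP ->. done.
case=> u Hu ->; split; first by apply/imsetP; exists u.
by apply/set0Pn; exists u; rewrite inE cc_refl Hu.
Qed.

Lemma omegaE : omega_tilde e = \max_(K in MC) #|cls K|.
Proof. by apply: eq_bigr => K _; rewrite clsK. Qed.

Lemma om_bound K : K \in MC -> #|cls K| <= omega_tilde e.
Proof. by move=> HK; rewrite omegaE; apply: (@leq_bigmax_cond _ (fun K => K \in MC) (fun K => #|cls K|)). Qed.

Definition NC := \max_v #|cls (N v)|.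

Lemma nc_le v : #|cls (N v)| <= NC.
Proof. exact: (@leq_bigmax _ (fun v => #|cls (N v)|) v). Qed.

Lemma clique_nbhd K v : K \in cl v -> K \subset N v.
Proof. by move=> HK; apply/subsetP => u Hu; apply/nbhdP; exists K. Qed.

Lemma omega_NC : omega_tilde e <= NC.
Proof.
rewrite omegaE; apply/bigmax_leqP => K HK.
case: (set_0Vmem K) => [->|[v Hv]]; first by rewrite /cls imset0 cards0.
apply: leq_trans (nc_le v); apply: subset_leq_card; apply: imsetS.
by apply: clique_nbhd; rewrite clE HK.
Qed.

Lemma cls_sub K1 K2 : K1 \in MC -> K2 \in MC -> cls K1 \subset cls K2 -> K1 \subset K2.
Proof.
move=> HK1 HK2 H; apply/subsetP => x Hx.
have : cc x \in cls K2 by apply: (subsetP H); exact: imset_f.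
by case/imsetP => y Hy /ccE Hxy; rewrite (in_clique_equiv Hxy HK2).
Qed.

Lemma cideg_NC : cideg e <= 2 ^ NC.
Proof.
apply/bigmax_leqP => v _.
have inj : {in cl v &, injective cls}.
  move=> K1 K2; rewrite !clE => /andP [H1 _] /andP [H2 _] H.
  by apply/eqP; rewrite eqEsubset !cls_sub // H subxx.
rewrite -(card_in_imset inj).
apply: leq_trans (_ : #|powerset (cls (N v))| <= _); last first.
  by rewrite card_powerset leq_pexp2l // nc_le.
apply: subset_leq_card; apply/subsetP => _ /imsetP [K HK ->].
by rewrite powersetE; apply: imsetS; apply: clique_nbhd.
Qed.

Definition nbrs C := [set D in cclasses e | qadj e C D].

Lemma NC_Delta : NC <= (Delta_tilde e).+1.
Proof.
apply/bigmax_leqP => v _.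
have Hv : cc v \in cclasses e by apply/imsetP; exists v.
have HD : #|nbrs (cc v)| <= Delta_tilde e := @leq_bigmax_cond _ _ (fun C => #|nbrs C|) _ Hv.
apply: leq_trans (_ : #|cc v |: nbrs (cc v)| <= _); last first.
  by rewrite cardsU1 -add1n; apply: leq_add => //; exact: leq_b1.
apply: subset_leq_card; apply/subsetP => _ /imsetP [u Hu ->].
rewrite in_setU1; case: (eqVneq (cc u) (cc v)) => //= Hne.
have Huv : u != v by apply: contraNneq Hne => ->.
move: Hu; rewrite /closed_nbhd in_setU1 (negbTE Huv) inE /= => Hvu.
rewrite inE; apply/andP; split; first by apply/imsetP; exists u.
rewrite /qadj eq_sym Hne /=; apply/existsP; exists v; rewrite cc_refl /=.
by apply/existsP; exists u; rewrite cc_refl.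
Qed.

Lemma Delta_NC : Delta_tilde e <= NC.
Proof.
apply/bigmax_leqP => C /imsetP [v _ ->].
apply: leq_trans (nc_le v); apply: subset_leq_card; apply/subsetP => D.
rewrite inE => /andP [/imsetP [y _ ->] /andP [_ /existsP [a /andP [Ha /existsP [b /andP [Hb Hab]]]]]].
move: Ha Hb; rewrite !memcc => /eqP Ha /eqP Hb.
apply/imsetP; exists b; last by apply/ccE.
by rewrite -(nbhd_eq Ha) /closed_nbhd in_setU1 inE Hab orbT.
Qed.

Lemma NC_cideg : NC <= cideg e * omega_tilde e.
Proof.
apply/bigmax_leqP => v _.
apply: leq_trans (_ : #|\bigcup_(K in cl v) cls K| <= _).
  apply: subset_leq_card; apply/subsetP => _ /imsetP [u Hu ->].
  case/nbhdP: Hu => K HK HuK; apply/bigcupP; exists K => //; exact: imset_f.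
apply: leq_trans (card_bigcup_leM (m := omega_tilde e) _) _.
  by move=> K; rewrite clE => /andP [HK _]; exact: om_bound.
by rewrite leq_mul2r (@leq_bigmax _ (fun v => #|cl v|) v) orbT.
Qed.

Lemma theta_le (A : {set T}) P : is_clique_cover e A P -> theta_in e A <= #|P|.
Proof. move=> HP; exact: (bigmin_le (fun P : {set {set T}} => #|P|) _ HP). Qed.

Lemma theta_cideg : theta_star e <= cideg e.
Proof.
apply/bigmax_leqP => v _.
apply: leq_trans (_ : #|cl v| <= _); last exact: (@leq_bigmax _ (fun v => #|cl v|) v).
apply: theta_le; apply/andP; split.
  apply/forallP => K; apply/implyP => HK; rewrite clique_nbhd // andbT.
  by move: HK; rewrite clE => /andP [/MC_clique].
apply/eqP/setP => u; apply/bigcupP/nbhdP; by case=> K HK HuK; exists K.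
Qed.

Lemma alpha_theta (A : {set T}) : alpha_in e A <= theta_in e A.
Proof.
apply/bigmax_leqP => S /andP [SA HS]; rewrite /theta_in.
elim/big_ind: _ => [|x y Hx Hy|P HP]; first exact: subset_leq_card.
  by rewrite leq_min Hx Hy.
case/andP: HP => /forallP HPc /eqP HPA.
pose f s := odflt set0 [pick B in P | s \in B].
have fP s : s \in S -> (f s \in P) && (s \in f s).
  move=> Hs; have : s \in cover P by rewrite HPA (subsetP SA).
  case/bigcupP => B HB HsB; rewrite /f; case: pickP => [B' /andP [-> ->] //|/(_ B)].
  by rewrite HB HsB.
have inj : {in S &, injective f}.
  move=> s s' Hs Hs' Hf; apply/eqP; apply/negP => /negP Hne.
  have /andP [HB Hsb] := fP s Hs; have /andP [_ Hsb'] := fP s' Hs'.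
  move: (HPc (f s)); rewrite HB /= => /andP [/cliqueP Hcl _].
  have := Hcl s s' Hsb; rewrite Hf => /(_ Hsb' Hne).
  by move/forallP: HS => /(_ s); rewrite Hs /= => /forallP /(_ s'); rewrite Hs' /= => /negbTE ->.
rewrite -(card_in_imset inj); apply: subset_leq_card; apply/subsetP => _ /imsetP [s Hs ->].
by case/andP: (fP s Hs).
Qed.

Lemma alpha_theta_star : alpha_star e <= theta_star e.
Proof.
apply/bigmax_leqP => v _; apply: leq_trans (alpha_theta _) _.
exact: (@leq_bigmax _ (fun v => theta_in e (N v)) v).
Qed.

Lemma nc_ramsey v : #|cls (N v)| < 2 ^ ((omega_tilde e).+1 + (alpha_star e).+1).
Proof.
rewrite ltnNge; apply/negP => H.
set S := cls (N v).
pose rep (C : {set T}) := odflt v [pick u in C :&: N v].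
have repP C : C \in S -> (rep C \in N v) && (cc (rep C) == C).
  case/imsetP => u Hu ->; rewrite /rep; case: pickP => [x|/(_ u)]; last first.
    by rewrite inE cc_refl Hu.
  rewrite inE => /andP [Hx HxN]; rewrite /= HxN /=; apply/eqP/ccE.
  by move: Hx; rewrite memcc => /eqP.
have repinj : {in S &, injective rep}.
  move=> C D HC HD Hr; have /andP [_ /eqP <-] := repP C HC.
  by have /andP [_ /eqP <-] := repP D HD; rewrite Hr.
set R := rep @: S.
have HR : #|R| = #|S| by rewrite card_in_imset.
have RN : R \subset N v by apply/subsetP => _ /imsetP [C HC ->]; case/andP: (repP C HC).
have ccinj : {in R &, injective cc}.
  move=> _ _ /imsetP [C HC ->] /imsetP [D HD ->].
  have /andP [_ /eqP ->] := repP C HC; have /andP [_ /eqP ->] := repP D HD.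
  by move=> ->.
have [[B HB [HBc HBcl]]|[B HB [HBc HBi]]] :=
  ramsey esy (leqnn _) (leq_trans H (eq_leq (esym HR))).
- have [K HK HBK] := clique_ext (A := B) (introT (cliqueP B) HBcl).
  have HcB : #|cls B| = #|B|.
    rewrite card_in_imset //; apply: sub_in2 ccinj => x; exact: (subsetP HB).
  have HBK' : #|cls B| <= #|cls K| by apply: subset_leq_card; apply: imsetS.
  have := om_bound HK; lia.
- have Hi : is_indep e B.
    apply/forallP => x; apply/implyP => Hx; apply/forallP => y; apply/implyP => Hy.
    by case: (eqVneq x y) => [->|Hxy]; [rewrite eirr | exact: HBi].
  have BN : B \subset N v by apply: subset_trans HB RN.
  have H1 : #|B| <= alpha_in e (N v).
    by apply: (@leq_bigmax_cond _ (fun S : {set T} => (S \subset N v) && is_indep e S) (fun S : {set T} => #|S|) B); rewrite BN Hi.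
  have H2 : alpha_in e (N v) <= alpha_star e := @leq_bigmax _ (fun v => alpha_in e (N v)) v.
  lia.
Qed.

Lemma NC_ramsey : NC < 2 ^ ((omega_tilde e).+1 + (alpha_star e).+1).
Proof.
set k := 2 ^ _.
have Hk : 0 < k by rewrite expn_gt0.
have : NC <= k.-1.
  apply/bigmax_leqP => v _; have := nc_ramsey v; rewrite -/k; lia.
lia.
Qed.

Definition nb (K : {set T}) := [set K' in MC | (K' != K) && (K' :&: K != set0)].

Lemma nb_cdeg K : K \in MC -> #|nb K| <= cdeg e.
Proof. by move=> HK; apply: (@leq_bigmax_cond _ (fun K => K \in MC) (fun K => #|nb K|)). Qed.

Lemma cideg_cdeg : cideg e <= (cdeg e).+1.
Proof.
apply/bigmax_leqP => v _.
case: (set_0Vmem (cl v)) => [->|[K0 HK0]]; first by rewrite cards0.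
have HK0' : K0 \in MC by move: HK0; rewrite clE => /andP [].
apply: leq_trans (_ : #|K0 |: nb K0| <= _).
  apply: subset_leq_card; apply/subsetP => K HK; rewrite in_setU1.
  case: (eqVneq K K0) => //= Hne; rewrite inE Hne.
  move: HK HK0; rewrite !clE => /andP [-> HvK] /andP [_ HvK0] /=.
  by apply/set0Pn; exists v; rewrite inE HvK HvK0.
by rewrite cardsU1 -add1n; apply: leq_add; [exact: leq_b1 | exact: nb_cdeg].
Qed.

Lemma cls_cl (A : {set T}) : #|cls A| <= #|cl @: A|.
Proof. by apply: card_imset_le_fun => x y _ _ /ccE. Qed.

Lemma cl_cls (A : {set T}) : #|cl @: A| <= #|cls A|.
Proof. by apply: card_imset_le_fun => x y _ _ /ccE. Qed.

Lemma omega_cdeg : omega_tilde e <= 2 ^ (cdeg e).+1.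
Proof.
rewrite omegaE; apply/bigmax_leqP => K HK.
apply: leq_trans (cls_cl K) _.
apply: leq_trans (_ : #|powerset (K |: nb K)| <= _).
  apply: subset_leq_card; apply/subsetP => _ /imsetP [u Hu ->].
  rewrite powersetE; apply/subsetP => K' HK'; rewrite in_setU1.
  case: (eqVneq K' K) => //= Hne; rewrite inE Hne.
  move: HK'; rewrite clE => /andP [-> HuK'] /=.
  by apply/set0Pn; exists u; rewrite inE HuK' Hu.
rewrite card_powerset leq_pexp2l //.
by rewrite cardsU1 -add1n; apply: leq_add; [exact: leq_b1 | exact: nb_cdeg].
Qed.

Lemma cdeg_bound : cdeg e <= omega_tilde e * cideg e.
Proof.
apply/bigmax_leqP => K HK.
apply: leq_trans (_ : #|\bigcup_(X in cl @: K) X| <= _).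
  apply: subset_leq_card; apply/subsetP => K'; rewrite inE => /andP [HK' /andP [_ /set0Pn [u]]].
  rewrite inE => /andP [HuK' HuK]; apply/bigcupP; exists (cl u); first exact: imset_f.
  by rewrite clE HK' HuK'.
apply: leq_trans (card_bigcup_leM (m := cideg e) _) _.
  by move=> _ /imsetP [u _ ->]; exact: (@leq_bigmax _ (fun v => #|cl v|) u).
rewrite leq_mul2r; apply/orP; right; apply: leq_trans (cl_cls K) _; exact: om_bound.
Qed.

Lemma all_bounds :
  let P3 := maxn (cideg e) (omega_tilde e) in
  [/\ Delta_tilde e <= P3 * P3 /\ P3 <= Hb (Delta_tilde e),
       cdeg e <= P3 * P3 /\ P3 <= Hb (cdeg e),
       P3 <= P3 * P3 /\ P3 <= Hb P3,
       maxn (alpha_star e) (omega_tilde e) <= P3 * P3 /\ P3 <= Hb (maxn (alpha_star e) (omega_tilde e)) &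
       maxn (theta_star e) (omega_tilde e) <= P3 * P3 /\ P3 <= Hb (maxn (theta_star e) (omega_tilde e))].
Proof.
move=> P3.
have sq : P3 <= P3 * P3 by nia.
have mul : cideg e * omega_tilde e <= P3 * P3 by apply: leq_mul; [exact: leq_maxl | exact: leq_maxr].
have h1 := Delta_NC. have h2 := NC_cideg. have h3 := omega_NC. have h4 := cideg_NC.
have h5 := NC_Delta. have h6 := cdeg_bound. have h7 := cideg_cdeg. have h8 := omega_cdeg.
have h9 := theta_cideg. have h10 := alpha_theta_star. have h11 := NC_ramsey.
have P3P5 : maxn (theta_star e) (omega_tilde e) <= P3 by rewrite /P3; lia.
have P4P5 : maxn (alpha_star e) (omega_tilde e) <= maxn (theta_star e) (omega_tilde e) by lia.
have B4 : P3 <= Hb (maxn (alpha_star e) (omega_tilde e)).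
  set m := maxn (alpha_star e) (omega_tilde e).
  have E1 : 2 ^ ((omega_tilde e).+1 + (alpha_star e).+1) <= 2 ^ (2 * m + 2) by apply: pow_le; rewrite /m; lia.
  have E2 : 2 ^ NC <= Hb m by apply: pow_le; lia.
  have E3 : 2 ^ (2 * m + 2) < Hb m := lt_pow _.
  rewrite /P3 geq_max; apply/andP; split; lia.
have B3 : P3 <= Hb P3.
  have E1 := lt_pow P3. have E2 : 2 ^ P3 <= Hb P3 by apply: pow_le; have := lt_pow (2 * P3 + 2); lia.
  lia.
split.
- split; first lia.
  have E1 : 2 ^ NC <= 2 ^ (Delta_tilde e).+1 by apply: pow_le.
  have E2 := lt_pow (Delta_tilde e).+1.
  have E3 : 2 ^ (Delta_tilde e).+1 <= Hb (Delta_tilde e) by apply: pow_le; have := lt_pow (2 * Delta_tilde e + 2); lia.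
  rewrite /P3 geq_max; apply/andP; split; lia.
- split; first by apply: leq_trans h6 _; rewrite mulnC.
  have E2 := lt_pow (cdeg e).+1.
  have E3 : 2 ^ (cdeg e).+1 <= Hb (cdeg e) by apply: pow_le; have := lt_pow (2 * cdeg e + 2); lia.
  rewrite /P3 geq_max; apply/andP; split; lia.
- by split.
- by split => //; lia.
- split; first lia.
  apply: leq_trans B4 _; exact: Hb_mono.
Qed.

End Graph.
Theorem corollary5p4 :
  forall p q : graph_param,
    List.In p cor54_params -> List.In q cor54_params ->
    param_bounded_by p q.
Proof.
have key : forall p : graph_param, List.In p cor54_params ->
  forall (T : finType) (e : rel T), symmetric e -> irreflexive e ->
  p T e <= maxn (cideg e) (omega_tilde e) * maxn (cideg e) (omega_tilde e) /\
  maxn (cideg e) (omega_tilde e) <= Hb (p T e).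
  move=> p Hp T e es ei; have [b1 b2 b3 b4 b5] := all_bounds es ei.
  by move: Hp => /= [<-|[<-|[<-|[<-|[<-|[]]]]]].
move=> p q Hp Hq; exists (fun x => Hb x * Hb x) => T e es ei.
have [q1 _] := key q Hq T e es ei; have [_ p2] := key p Hp T e es ei.
by apply: leq_trans q1 _; apply: leq_mul.
Qed.
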